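(* Let $n\ge 2$. Every subgroup $H$ of $B_n(D)$ with $P_n(D)\subsetneq H\subset B_n(D)$ is partially bi-orderable. In particular, $B_n(D)$ is partially bi-orderable.
   Context: $B_n(D)$ is the Artin braid group on $n$ strands, with generators $\sigma_1,\dots,\sigma_{n-1}$ and relations $\sigma_i\sigma_j=\sigma_j\sigma_i$ for $|i-j|\ge 2$ and $\sigma_i\sigma_{i+1}\sigma_i=\sigma_{i+1}\sigma_i\sigma_{i+1}$. The permutation homomorphism $\pi: B_n(D)\to S_n$ is given by $\pi(\sigma_i)=(i,i+1)$, and $P_n(D)=\ker\pi$. A group $G$ is partially bi-orderable if there is a subsemigroup $Q\subset G$ with $Q\cap Q^{-1}=\emptyset$ and $gQg^{-1}\subset Q$ for all $g\in G$. *)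

(* Defs.v *)
(* The Artin braid group B_n(D) is presented by generators
   sigma_1..sigma_{n-1} and the braid relations; we model its elements as
   words in the letters sigma_i^{+-1}, modulo the congruence [beq n] generated
   by free cancellation and the braid relations (this is exactly the group
   given by the presentation). *)
From mathcomp Require Import all_boot all_order all_fingroup.
From mathcomp Require Import zify.
Set Implicit Arguments. Unset Strict Implicit. Unset Printing Implicit Defensive.

(* a letter (i, true) is sigma_{i+1}, (i, false) is sigma_{i+1}^{-1} *)
Definition letter (n : nat) := ('I_n.-1 * bool)%type.
Definition bword (n : nat) := seq (letter n).

Definition winv n (w : bword n) : bword n :=
  rev (map (fun l : letter n => (l.1, ~~ l.2)) w).

Inductive beq (n : nat) : bword n -> bword n -> Prop :=
| beq_refl u : beq u u
| beq_sym u v : beq u v -> beq v u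
| beq_trans u v w : beq u v -> beq v w -> beq u w
| beq_cat u u' v v' : beq u u' -> beq v v' -> beq (u ++ v) (u' ++ v')
| beq_free (i : 'I_n.-1) (b : bool) : beq [:: (i, b); (i, ~~ b)] [::]
| beq_comm (i j : 'I_n.-1) : ((i : nat).+1 < j) || ((j : nat).+1 < i) ->
    beq [:: (i, true); (j, true)] [:: (j, true); (i, true)]
| beq_braid (i j : 'I_n.-1) : (j : nat) = i.+1 ->
    beq [:: (i, true); (j, true); (i, true)] [:: (j, true); (i, true); (j, true)].

Lemma lt_i_n n (i : 'I_n.-1) : (i : nat) < n.
Proof. have := ltn_ord i; lia. Qed.
Lemma lt_Si_n n (i : 'I_n.-1) : (i : nat).+1 < n.
Proof. have := ltn_ord i; lia. Qed.

(* pi(sigma_{i+1}) = transposition (i, i+1) (0-indexed positions in 'I_n) *)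
Definition sigma_perm n (i : 'I_n.-1) : 'S_n :=
  tperm (Ordinal (lt_i_n i)) (Ordinal (lt_Si_n i)).

Definition piw n (w : bword n) : 'S_n :=
  foldr (fun l p => (sigma_perm l.1 * p)%g) 1%g w.

Definition pure n (w : bword n) : Prop := piw w = 1%g.

Definition beq_closed n (S : bword n -> Prop) : Prop :=
  forall u v, beq u v -> S u -> S v.

Definition is_subgroup n (H : bword n -> Prop) : Prop :=
  [/\ beq_closed H, H [::],
      (forall u v, H u -> H v -> H (u ++ v)) &
      (forall u, H u -> H (winv u))].

Definition partially_biorderable n (H : bword n -> Prop) : Prop :=
  exists Q : bword n -> Prop,
    beq_closed Q /\ (forall u, Q u -> H u) /\ (exists u, Q u) /\
    (forall u v, Q u -> Q v -> Q (u ++ v)) /\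
    (forall u, Q u -> ~ Q (winv u)) /\
    (forall g u, H g -> Q u -> Q (g ++ u ++ winv g)).

(* Main.v *)
Require Import Defs.
From mathcomp Require Import all_boot all_order all_fingroup.
From mathcomp Require Import zify.
Set Implicit Arguments.

Definition ct n (w : bword n) := count (fun l : letter n => l.2) w.
Definition cf n (w : bword n) := count (fun l : letter n => ~~ l.2) w.

Lemma beq_bal n (u v : bword n) : beq u v -> ct u + cf v = ct v + cf u.
Proof.
elim=> {u v} /=.
- by move=> *; lia.
- by move=> *; lia.
- by move=> *; lia.
- by move=> u1 u2 v1 v2 _ H1 _ H2; rewrite /ct /cf !count_cat -!/(ct _) -!/(cf _); lia.
- by move=> _ [].
- by [].
- by [].
Qed.

Lemma ct_winv n (u : bword n) : ct (winv u) = cf u.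
Proof. by rewrite /ct /winv count_rev count_map. Qed.
Lemma cf_winv n (u : bword n) : cf (winv u) = ct u.
Proof.
rewrite /cf /winv count_rev count_map; apply: eq_count => l /=; by rewrite negbK.
Qed.

Lemma gen n (H : bword n -> Prop) (w0 : bword n) :
  beq_closed H -> (forall u v, H u -> H v -> H (u ++ v)) ->
  (forall u, H u -> H (winv u)) -> H w0 -> cf w0 < ct w0 ->
  partially_biorderable H.
Proof.
move=> Hc Hm Hi Hw0 Hlt.
exists (fun u => H u /\ cf u < ct u); split; [|split; [|split; [|split; [|split]]]].
- move=> u v Huv [Hu Hl]; split; first exact: Hc Hu.
  have := beq_bal Huv; lia.
- by move=> u [].
- by exists w0.
- move=> u v [Hu Hlu] [Hv Hlv]; split; first exact: Hm.
  rewrite /ct /cf !count_cat -/(ct u) -/(cf u) -/(ct v) -/(cf v); lia.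
- move=> u [_ Hl] [_]; rewrite ct_winv cf_winv; lia.
- move=> g u Hg [Hu Hl]; split; first by apply: (Hm) => //; apply: (Hm) => //; exact: Hi.
  rewrite /ct /cf !count_cat -/(ct u) -/(cf u) -/(ct g) -/(cf g)
     -/(ct (winv g)) -/(cf (winv g)) ct_winv cf_winv; lia.
Qed.

Theorem mainTheorem4 (n : nat) : 2 <= n ->
  (forall H : bword n -> Prop,
      is_subgroup H ->
      (forall w, pure w -> H w) ->
      (exists w, H w /\ ~ pure w) ->
      partially_biorderable H)
  /\ partially_biorderable (fun _ : bword n => True).
Proof.
move=> hn.
have h0 : 0 < n.-1 by lia.
pose i0 : 'I_n.-1 := Ordinal h0.
pose w0 : bword n := [:: (i0, true); (i0, true)].
have hw : cf w0 < ct w0 by [].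
have hp : pure w0 by rewrite /pure /w0 /piw /= mulg1 tperm2.
split.
- move=> H [Hc H1 Hm Hi] Hp _.
  exact: (@gen _ _ w0) (Hp _ hp) hw.
- exact: (@gen _ _ w0).
Qed.
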